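(* Let $k$ be a positive integer and $i$ an integer with $1\le i<\left\lfloor\frac{k+1}2\right\rfloor$. Then $\beta=\frac1{i^2}$ is a zero of the polynomial $P_k(1,\beta,0)$ of multiplicity at least $\left\lfloor\frac{k+1}2\right\rfloor-i$.
   Context: Define $\widetilde c_n\in\mathbb Q[\beta]$ by $\widetilde c_0=2$, $\widetilde c_1=1$, $(n+1)\widetilde c_{n+1}=\widetilde c_n+\frac\beta4(n-1)\widetilde c_{n-1}$ for $n\ge1$, and $\widetilde c_n=0$ for $n<0$. $P_k(1,\beta,0)$ is the $k\times k$ determinant with $(j,l)$ entry $\widetilde c_{k-2(j-1)+(l-1)}$, $1\le j,l\le k$. *)

(* Defs.v *)
(* Polynomials in beta over Q: {poly rat}, beta = 'X. *)
From HB Require Import structures.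
From mathcomp Require Import all_boot all_order all_algebra.
Set Implicit Arguments. Unset Strict Implicit. Unset Printing Implicit Defensive.
Import Order.TTheory GRing.Theory Num.Theory.
Local Open Scope ring_scope.

(* ctpair n = (c~_n, c~_{n+1}).
   c~_0 = 2, c~_1 = 1,
   (m+1) c~_{m+1} = c~_m + (beta/4) (m-1) c~_{m-1}  for m >= 1;
   with m = n+1:  c~_{n+2} = (n+2)^-1 (c~_{n+1} + (n/4) beta c~_n). *)
Fixpoint ctpair (n : nat) : {poly rat} * {poly rat} :=
  match n with
  | 0%N => (2%:P, 1%:P)
  | n'.+1 =>
      let: (a, b) := ctpair n' in
      (b, ((n'.+2)%:R)^-1 *: (b + ((n'%:R) / 4) *: ('X * a)))
  end.

Definition ctn (n : nat) : {poly rat} := (ctpair n).1.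

Definition ct (n : int) : {poly rat} :=
  match n with
  | Posz m => ctn m
  | Negz _ => 0
  end.

(* P_k(1,beta,0): k x k determinant with (j,l) entry c~_{k-2(j-1)+(l-1)},
   1 <= j,l <= k; here with 0-based indices j,l < k. *)
Definition Pk (k : nat) : {poly rat} :=
  \det (\matrix_(j < k, l < k) ct (k%:Z - 2 * (j : nat)%:Z + (l : nat)%:Z)).

(* Main.v *)
Require Import Defs.
From HB Require Import structures.
From mathcomp Require Import all_boot all_order all_algebra.
From mathcomp Require Import ring zify.
Import Order.TTheory GRing.Theory Num.Theory.
Local Open Scope ring_scope.

Definition bb (i : nat) : rat := 2 * i%:R.
Definition a0 (i : nat) : rat := ((i ^ 2)%:R)^-1.
Definition dseq (i n : nat) : rat := if n is n'.+1 then (ctn n).[a0 i] else 1.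
Fixpoint fseq (i p n : nat) : rat :=
  match p with
  | 0%N => dseq i n
  | p'.+1 => match n with
             | 0%N => bb i * fseq i p' 0
             | n'.+1 => bb i * fseq i p' n'.+1 - fseq i p' n'
             end
  end.

Definition Rec (i : nat) (f : nat -> rat) (p : nat) :=
  bb i ^+ 2 * f 1%N = (bb i ^+ 2 - bb i * p%:R) * f 0%N /\
  forall n, bb i ^+ 2 * (n.+2)%:R * f n.+2 =
            (bb i ^+ 2 - bb i * p%:R) * f n.+1 + (n%:R - p%:R) * f n.

Lemma ctnSS n : ctn n.+2 = ((n.+2)%:R)^-1 *: (ctn n.+1 + ((n%:R) / 4) *: ('X * ctn n)).
Proof. rewrite /ctn /=. by case: (ctpair n). Qed.

Lemma eq_diff (x y z : rat) : x - y = z -> z = 0 -> x = y.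
Proof. by move=> <- /eqP; rewrite subr_eq0 => /eqP. Qed.

Lemma rec0 i : (0 < i)%N -> Rec i (dseq i) 0.
Proof.
move=> hi; split.
  by rewrite /dseq /ctn /= hornerC mulr0 subr0.
move=> n; rewrite /dseq ctnSS hornerZ hornerD hornerZ (mulrC 'X) hornerMX.
have hi' : (i%:R : rat) != 0 by rewrite pnatr_eq0 -lt0n.
have hn : ((n.+2)%:R : rat) != 0 by rewrite pnatr_eq0.
case: n hn => [|n] hn.
  rewrite /bb /a0 /=. by field.
rewrite /bb /a0. field. by rewrite hi' -(natrD _ 3 n) pnatr_eq0.
Qed.

Lemma recS i f p : Rec i f p ->
  Rec i (fun n => match n with 0%N => bb i * f 0%N | n'.+1 => bb i * f n'.+1 - f n' end) p.+1.
Proof.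
move=> [H0 H]; split.
  apply: eq_diff (_ : _ = bb i * (bb i ^+ 2 * f 1%N - (bb i ^+ 2 - bb i * p%:R) * f 0%N)) _.
    ring.
  by rewrite H0 subrr mulr0.
case=> [|n].
  apply: eq_diff (_ : _ = bb i * (bb i ^+ 2 * (0.+2)%:R * f 2%N - ((bb i ^+ 2 - bb i * p%:R) * f 1%N + (0%:R - p%:R) * f 0%N)) - (bb i ^+ 2 * f 1%N - (bb i ^+ 2 - bb i * p%:R) * f 0%N)) _.
    ring.
  by rewrite H H0 !subrr mulr0 subrr.
apply: eq_diff (_ : _ = bb i * (bb i ^+ 2 * (n.+3)%:R * f n.+3 - ((bb i ^+ 2 - bb i * p%:R) * f n.+2 + (n.+1%:R - p%:R) * f n.+1)) - (bb i ^+ 2 * (n.+2)%:R * f n.+2 - ((bb i ^+ 2 - bb i * p%:R) * f n.+1 + (n%:R - p%:R) * f n))) _.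
  ring.
by rewrite H H !subrr mulr0 subrr.
Qed.

Lemma rec_f i p : (0 < i)%N -> Rec i (fseq i p) p.
Proof. move=> hi; elim: p => [|p IH]; [exact: rec0 | exact: recS]. Qed.

Lemma bb_neq0 i : (0 < i)%N -> bb i != 0.
Proof. by move=> hi; rewrite /bb mulf_neq0 // pnatr_eq0 -lt0n. Qed.

Lemma g_zero i (g : nat -> rat) : (0 < i)%N -> Rec i g i ->
  forall n, (i < n)%N -> g n = 0.
Proof.
move=> hi [H0 H].
have hb := bb_neq0 i hi.
pose h n := bb i * (n.+1)%:R * g n.+1 + (n%:R - i%:R) * g n.
have hz : forall n, h n = 0.
  elim=> [|n IH].
    apply/eqP; rewrite -(mulrI_eq0 _ (lregP hb)); apply/eqP.
    apply: eq_diff (_ : _ = bb i ^+ 2 * g 1%N - (bb i ^+ 2 - bb i * i%:R) * g 0%N) _.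
      rewrite /h /bb; ring.
    by rewrite H0 subrr.
  apply/eqP; rewrite -(mulrI_eq0 _ (lregP hb)); apply/eqP.
  apply: eq_diff (_ : _ = h n + (bb i ^+ 2 * (n.+2)%:R * g n.+2 -
            ((bb i ^+ 2 - bb i * i%:R) * g n.+1 + (n%:R - i%:R) * g n))) _.
    rewrite /h /bb; ring.
  by rewrite IH H subrr addr0.
suff : forall m, g (i + m.+1)%N = 0.
  move=> hm n hn; have := hm (n - i.+1)%N. by rewrite -addSnnS subnKC.
elim=> [|m IH].
  have := hz i; rewrite /h subrr mul0r addr0 addn1 => /eqP.
  by rewrite !mulf_eq0 !pnatr_eq0 /= (gtn_eqF hi) /= => /eqP.
have := hz (i + m.+1)%N; rewrite /h IH mulr0 addr0 => /eqP.
by rewrite !mulf_eq0 !pnatr_eq0 /= (gtn_eqF hi) /= -addnS => /eqP.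
Qed.

Definition Wn k (s : nat -> rat) (n : nat) : 'rV[rat]_k := \row_(l < k) s (n + l)%N.
Definition Sp k (s : nat -> rat) m p : 'M[rat]_(p, k) := \matrix_(a < p) Wn k s (m + a)%N.

Lemma Sp_mono1 k s m p : (Sp k s m.+1 p <= Sp k s m p.+1)%MS.
Proof.
apply/row_subP => a; rewrite rowK.
have -> : Wn k s (m.+1 + a)%N = row (lift ord0 a) (Sp k s m p.+1).
  by rewrite rowK /= /bump /= add1n addnS.
exact: row_sub.
Qed.

Lemma Sp_mono2 k s m p : (Sp k s m p <= Sp k s m p.+1)%MS.
Proof.
apply/row_subP => a; rewrite rowK.
have -> : Wn k s (m + a)%N = row (widen_ord (leqnSn p) a) (Sp k s m p.+1).
  by rewrite rowK.
exact: row_sub.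
Qed.

Lemma Sp_last k s m p : (Wn k s (m + p)%N <= Sp k s m p.+1)%MS.
Proof.
have -> : Wn k s (m + p)%N = row ord_max (Sp k s m p.+1) by rewrite rowK.
exact: row_sub.
Qed.

Lemma span_f i k p m :
  (Wn k (fseq i p) (m + p) - bb i ^+ p *: Wn k (dseq i) (m + p) <= Sp k (dseq i) m p)%MS.
Proof.
elim: p m => [|p IH] m.
  by rewrite expr0 scale1r subrr sub0mx.
set F := fseq i p; set d := dseq i.
have E : Wn k (fseq i p.+1) (m + p.+1) - bb i ^+ p.+1 *: Wn k d (m + p.+1) =
  bb i *: (Wn k F (m.+1 + p) - bb i ^+ p *: Wn k d (m.+1 + p))
  - (Wn k F (m + p) - bb i ^+ p *: Wn k d (m + p)) - bb i ^+ p *: Wn k d (m + p).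
  apply/rowP => l; rewrite !mxE !addnS !addSn /=. rewrite /F exprS. ring.
rewrite E; apply: addmx_sub; first apply: addmx_sub.
- apply: scalemx_sub; exact: submx_trans (IH m.+1) (Sp_mono1 _ _ _ _).
- rewrite eqmx_opp; exact: submx_trans (IH m) (Sp_mono2 _ _ _ _).
- rewrite eqmx_opp; apply: scalemx_sub; exact: Sp_last.
Qed.

Lemma win_in i k : (0 < i)%N -> forall n, (0 < n)%N ->
  (Wn k (dseq i) n <= Sp k (dseq i) 1 i)%MS.
Proof.
move=> hi; elim/ltn_ind => n IH hn.
case: (leqP n i) => hni.
  have hn' : (n.-1 < i)%N by rewrite prednK.
  have -> : Wn k (dseq i) n = row (Ordinal hn') (Sp k (dseq i) 1 i).
    by rewrite rowK /= add1n prednK.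
  exact: row_sub.
have := span_f i k i (n - i); rewrite subnK ?(ltnW hni) //.
have -> : Wn k (fseq i i) n = 0.
  apply/rowP => l; rewrite !mxE; apply: (g_zero i _ hi (rec_f i i hi)).
  exact: leq_trans hni (leq_addr _ _).
rewrite sub0r => H.
have H2 : (Wn k (dseq i) n <= Sp k (dseq i) (n - i) i)%MS.
  have -> : Wn k (dseq i) n = - (bb i ^+ i)^-1 *: (- (bb i ^+ i *: Wn k (dseq i) n)).
    rewrite scaleNr scalerN opprK scalerA mulVf ?scale1r //.
    by rewrite expf_neq0 // bb_neq0.
  exact: scalemx_sub.
apply: submx_trans H2 _; apply/row_subP => a; rewrite rowK; apply: IH.
  have := ltn_ord a; lia.
lia.
Qed.

Lemma prod_if (c : {poly rat}) (rk n : nat) :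
  \prod_(j < n) (if (rk <= j)%N then c else 1) = c ^+ (n - rk).
Proof.
elim: n => [|n IH]; first by rewrite big_ord0 sub0n expr0.
rewrite big_ord_recr IH.
case: (leqP rk n) => h.
  by rewrite subSn // exprSr; exact: erefl.
have -> : (n.+1 - rk = 0)%N by apply/eqP; rewrite subn_eq0.
have -> : (n - rk = 0)%N by apply/eqP; rewrite subn_eq0 ltnW.
exact: mulr1.
Qed.
Lemma det_root_mult (n : nat) (A : 'M[{poly rat}]_n) (x : rat) (r : nat) :
  (\rank (map_mx (horner_eval x) A) + r <= n)%N -> (('X - x%:P) ^+ r %| \det A).
Proof.
set A0 := map_mx _ A; set rk := \rank A0 => hr.
set L := col_ebase A0; set P := invmx L.
have hL : L \in unitmx by apply: col_ebase_unit.
have hP : P \in unitmx by rewrite unitmx_inv.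
have E0 : P *m A0 = pid_mx rk *m row_ebase A0.
  by rewrite -{1}(mulmx_ebase A0) -!mulmxA mulKmx.
pose Ap := map_mx polyC P *m A.
have EA : map_mx (horner_eval x) Ap = P *m A0.
  rewrite map_mxM; congr (_ *m _); apply/matrixP => a b.
  rewrite !mxE; exact: hornerC.
have Hz : forall (j l : 'I_n), (rk <= j)%N -> (Ap j l).[x] = 0.
  move=> j l hj; move: (EA); rewrite E0 => /matrixP /(_ j l); rewrite [in X in X = _]mxE horner_evalE => ->.
  rewrite mxE big1 // => t _.
  by rewrite mxE ltnNge hj andbF mul0r.
pose dv : 'rV[{poly rat}]_n := \row_j (if (rk <= j)%N then 'X - x%:P else 1).
pose Q : 'M[{poly rat}]_n :=
  \matrix_(j, l) (if (rk <= j)%N then Ap j l %/ ('X - x%:P) else Ap j l).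
have EQ : Ap = diag_mx dv *m Q.
  apply/matrixP => j l; rewrite mul_diag_mx [RHS]mxE [dv _ _]mxE [Q _ _]mxE.
  case: ifP => hj; last by rewrite mul1r.
  rewrite mulrC divpK // dvdp_XsubCl; by rewrite /root Hz.
have hdet : \det Ap = (\det P)%:P * \det A.
  rewrite det_mulmx; congr (_ * _).
  by rewrite (det_map_mx polyC).
have hP0 : \det P != 0 by rewrite -unitfE -unitmxE.
rewrite -(dvdpZr _ _ hP0) -mul_polyC -hdet EQ det_mulmx det_diag.
apply: dvdp_mulr.
under eq_bigr do rewrite mxE.
rewrite prod_if; apply: dvdp_exp2l; lia.
Qed.

Lemma dseqE i n : (0 < n)%N -> dseq i n = (ctn n).[a0 i].
Proof. by case: n. Qed.

Theorem lemma4p8 (k i : nat) :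
  (0 < k)%N -> (1 <= i)%N -> (i < (k.+1)./2)%N ->
  (('X - ((i ^ 2)%:R : rat)^-1%:P) ^+ ((k.+1)./2 - i) %| Pk k)%R.
Proof.
move=> hk hi hik; set h := (k.+1)./2 in hik *.
have H2 : (h.*2 <= k.+1 <= h.*2 + 1)%N.
  have := odd_double_half k.+1; rewrite -/h; have := leq_b1 (odd k.+1); lia.
rewrite /Pk; apply: det_root_mult; rewrite -/(a0 i).
set A0 := map_mx _ _.
pose Bot : 'M[rat]_(k - h, k) :=
  \matrix_(j < k - h, l < k) (ct (k%:Z - 2 * (h + j)%N%:Z + l%:Z)).[a0 i].
have Hsub : (A0 <= Sp k (dseq i) 1 i + Bot)%MS.
  apply/row_subP => j; case: (ltnP j h) => hj.
    have -> : row j A0 = Wn k (dseq i) (k - 2 * j).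
      apply/rowP => l; rewrite !mxE horner_evalE.
      have -> : (k%:Z - 2 * (j : nat)%:Z + (l : nat)%:Z) = Posz (k - 2 * j + l)%N by lia.
      rewrite dseqE //; lia.
    apply: submx_trans (win_in i k hi (k - 2 * j) _) (addsmxSl _ _); lia.
  have hjh : (j - h < k - h)%N by have := ltn_ord j; lia.
  have -> : row j A0 = row (Ordinal hjh) Bot.
    apply/rowP => l; rewrite !mxE horner_evalE /=.
    by rewrite subnKC.
  exact: submx_trans (row_sub _ _) (addsmxSr _ _).
have R1 := mxrankS Hsub.
have [R2 _] := mxrank_adds_leqif (Sp k (dseq i) 1 i) Bot.
have R3 := rank_leq_row (Sp k (dseq i) 1 i).
have R4 := rank_leq_row Bot.
lia.
Qed.
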